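(* Let $\mathcal{B}\subseteq\mathcal{C}^n$. Then for every $k\in\mathbb{N}$, every $R\in\mathbb{R}^{n\times k}$ and every $f\in\mathbb{R}^n\setminus\mathbb{Z}^n$, one has $C_{\mathcal{B}}(R,f)=C_{\operatorname{cl}_f(\mathcal{B}_f)}(R,f)$.
   Context: $\mathcal{C}^n$ is the family of all $n$-dimensional closed convex subsets of $\mathbb{R}^n$; $\mathcal{C}^n_f$ is the subfamily containing $f$ in the interior, and $\mathcal{B}_f=\mathcal{B}\cap\mathcal{C}^n_f$. For $B\in\mathcal{C}^n$ with $0\in\operatorname{int}(B)$, $\psi_B(r)=\inf\{\lambda>0:r\in\lambda B\}$. For $R=(r_1,\dots,r_k)$ and $B\in\mathcal{C}^n$: if $f\in\operatorname{int}(B)$, $C_B(R,f)=\{s\in\mathbb{R}^k_{\ge0}:\sum_j s_j\psi_{B-f}(r_j)\ge1\}$, otherwise $C_B(R,f)=\mathbb{R}^k_{\ge0}$; $C_{\mathcal{B}}(R,f)=\bigcap_{B\in\mathcal{B}}C_B(R,f)$ ($=\mathbb{R}^k_{\ge0}$ if the family is empty). The polar of $X$ is $X^\circ=\{r:r\cdot x\le1\ \forall x\in X\}$; the $f$-metric on $\mathcal{C}^n_f$ is $d_f(B_1,B_2)=d_H((B_1-f)^\circ,(B_2-f)^\circ)$ with $d_H$ the Hausdorff metric; $\operatorname{cl}_f(\mathcal{A})$ denotes the closure of $\mathcal{A}\subseteq\mathcal{C}^n_f$ in $\mathcal{C}^n_f$ with respect to $d_f$. *)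

(* Defs.v *)
From HB Require Import structures.
From mathcomp Require Import all_boot all_order all_algebra.
From mathcomp Require Import all_classical all_reals.
From mathcomp Require Import ereal.
Set Implicit Arguments. Unset Strict Implicit. Unset Printing Implicit Defensive.
Import Order.TTheory GRing.Theory Num.Theory.
Local Open Scope classical_set_scope.
Local Open Scope ring_scope.

Section Defs.
Variables (R : realType) (n : nat).
Notation vec := 'cV[R]_n.

Definition dotv (u v : vec) : R := \sum_(i < n) u i 0 * v i 0.
Definition distv (u v : vec) : R := Num.sqrt (dotv (u - v) (u - v)).

Definition interior_pt (B : set vec) (x : vec) : Prop :=
  exists2 e : R, 0 < e & forall y, distv y x < e -> B y.
Definition closed_set (B : set vec) : Prop :=
  forall x, (forall e : R, 0 < e -> exists2 y, B y & distv y x < e) -> B x.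
Definition convex_set (B : set vec) : Prop :=
  forall x y (t : R), B x -> B y -> 0 <= t <= 1 -> B ((1 - t) *: x + t *: y).
(* n-dimensional: the affine hull of B is all of R^n *)
Definition full_dim (B : set vec) : Prop :=
  forall x : vec, exists (m : nat) (p : 'I_m -> vec) (l : 'I_m -> R),
    (forall i, B (p i)) /\ \sum_(i < m) l i = 1 /\ x = \sum_(i < m) l i *: p i.

Definition Cn : set (set vec) :=
  [set B | closed_set B /\ convex_set B /\ full_dim B].
Definition Cnf (f : vec) : set (set vec) := [set B | Cn B /\ interior_pt B f].

Definition translate (B : set vec) (f : vec) : set vec := [set b - f | b in B].

Definition gauge (B : set vec) (r : vec) : R :=
  inf [set lam : R | 0 < lam /\ exists2 b, B b & r = lam *: b].

Definition nonnegv (k : nat) (s : 'cV[R]_k) : Prop := forall j, 0 <= s j 0.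

Definition CB (k : nat) (B : set vec) (Rm : 'M[R]_(n, k)) (f : vec) : set 'cV[R]_k :=
  [set s | nonnegv s /\
     (interior_pt B f ->
        1 <= \sum_(j < k) s j 0 * gauge (translate B f) (col j Rm))].

(* C_calB(R,f) = intersection (R^k_{>=0} if the family is empty) *)
Definition CBfam (k : nat) (F : set (set vec)) (Rm : 'M[R]_(n, k)) (f : vec)
  : set 'cV[R]_k :=
  [set s | nonnegv s /\ forall B, F B -> CB B Rm f s].

Definition polar (X : set vec) : set vec := [set r | forall x, X x -> dotv r x <= 1].

Definition edist_set (x : vec) (Y : set vec) : \bar R :=
  ereal_inf [set (distv x y)%:E | y in Y].
Definition hausdorff (X Y : set vec) : \bar R :=
  maxe (ereal_sup [set edist_set x Y | x in X])
       (ereal_sup [set edist_set y X | y in Y]).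

Definition fmetric (f : vec) (B1 B2 : set vec) : \bar R :=
  hausdorff (polar (translate B1 f)) (polar (translate B2 f)).

Definition clf (f : vec) (A : set (set vec)) : set (set vec) :=
  [set B | Cnf f B /\
     forall e : R, 0 < e -> exists2 A0, A A0 & (fmetric f B A0 < e%:E)%E].

Definition integral_vec (f : vec) : Prop :=
  forall i, exists z : int, f i 0 = z%:~R.

End Defs.

(* Main.v *)
Require Import Defs.
From HB Require Import structures.
From mathcomp Require Import all_boot all_order all_algebra.
From mathcomp Require Import all_classical all_reals.
From mathcomp Require Import ereal.
From mathcomp Require Import ring lra.
Set Implicit Arguments. Unset Strict Implicit. Unset Printing Implicit Defensive.
Import Order.TTheory GRing.Theory Num.Theory.
Local Open Scope classical_set_scope.
Local Open Scope ring_scope.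

Section Aux.
Variables (R : realType) (n : nat).
Notation vec := 'cV[R]_n.
Implicit Types u v w x y z : vec.

Lemma dotvC u v : dotv u v = dotv v u.
Proof. by rewrite /dotv; apply: eq_bigr => i _; rewrite mulrC. Qed.

Lemma dotvDl u v w : dotv (u + v) w = dotv u w + dotv v w.
Proof. by rewrite /dotv -big_split; apply: eq_bigr => i _; rewrite !mxE mulrDl. Qed.

Lemma dotvZl a u w : dotv (a *: u) w = a * dotv u w.
Proof. by rewrite /dotv mulr_sumr; apply: eq_bigr => i _; rewrite !mxE mulrA. Qed.

Lemma dotvNl u w : dotv (- u) w = - dotv u w.
Proof. by rewrite -scaleN1r dotvZl mulN1r. Qed.

Lemma dotvBl u v w : dotv (u - v) w = dotv u w - dotv v w.
Proof. by rewrite dotvDl dotvNl. Qed.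

Lemma dotvDr u v w : dotv w (u + v) = dotv w u + dotv w v.
Proof. by rewrite !(dotvC w) dotvDl. Qed.

Lemma dotvZr a u w : dotv w (a *: u) = a * dotv w u.
Proof. by rewrite !(dotvC w) dotvZl. Qed.

Lemma dotvBr u v w : dotv w (u - v) = dotv w u - dotv w v.
Proof. by rewrite !(dotvC w) dotvBl. Qed.

Lemma dotv0r u : dotv u 0 = 0.
Proof. by rewrite /dotv big1 // => i _; rewrite mxE mulr0. Qed.

Lemma dotvv_ge0 u : 0 <= dotv u u.
Proof. by rewrite /dotv sumr_ge0 // => i _; rewrite -expr2 sqr_ge0. Qed.

Lemma dotvv_eq0 u : dotv u u = 0 -> u = 0.
Proof.
move=> /eqP; rewrite /dotv psumr_eq0; last by move=> i _; rewrite -expr2 sqr_ge0.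
move=> /allP H; apply/matrixP => i j; rewrite (ord1 j) mxE.
have := H i (mem_index_enum i); rewrite mulf_eq0 orbb => /eqP //.
Qed.

Lemma coord_le u i : u i 0 ^+ 2 <= dotv u u.
Proof.
rewrite /dotv (bigD1 i) //= expr2 lerDl sumr_ge0 // => l _.
by rewrite -expr2 sqr_ge0.
Qed.

Lemma dotvv_le u c : (forall i, `|u i 0| <= c) -> dotv u u <= n%:R * c ^+ 2.
Proof.
move=> H; rewrite /dotv.
have -> : n%:R * c ^+ 2 = \sum_(i < n) c ^+ 2 by rewrite sumr_const card_ord mulr_natl.
apply: ler_sum => i _; rewrite -expr2 -real_normK ?num_real //.
by rewrite lerXn2r ?nnegrE ?(le_trans _ (H i)).
Qed.

Lemma dot_le (l : R) u v : 0 < l -> 2 * dotv u v <= l * dotv u u + dotv v v / l.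
Proof.
move=> l0; rewrite /dotv mulr_sumr mulr_sumr mulr_suml -big_split /=.
apply: ler_sum => i _.
set a := u i 0; set b := v i 0.
have : 0 <= (l * a - b) ^+ 2 / l by rewrite divr_ge0 ?sqr_ge0 ?ltW.
have -> : (l * a - b) ^+ 2 / l = l * (a * a) + b * b / l - 2 * (a * b).
  by field; rewrite gt_eqF.
by rewrite subr_ge0.
Qed.

Lemma distv_ltE x y (e : R) : 0 < e -> (distv x y < e) = (dotv (x - y) (x - y) < e ^+ 2).
Proof.
move=> e0; rewrite /distv; have {1}-> : e = Num.sqrt (e ^+ 2) by rewrite sqrtr_sqr gtr0_norm.
by rewrite ltr_sqrt ?exprn_gt0.
Qed.

End Aux.


Section Lim.
Variable R : realType.

Definition wk (k : nat) : R := (k.+1%:R)^-1.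

Lemma wk_gt0 k : 0 < wk k.
Proof. by rewrite /wk invr_gt0 ltr0Sn. Qed.

Lemma wk_le1 k : wk k <= 1.
Proof. by rewrite /wk invf_le1 ?ler1n ?ltr0Sn. Qed.

Lemma wk_mono k m : (k <= m)%N -> wk m <= wk k.
Proof. by move=> km; rewrite /wk lef_pV2 ?posrE ?ltr0Sn // ler_nat. Qed.

Lemma wk_small (K e : R) : 0 < e -> exists k, K * wk k < e.
Proof.
move=> e0; have K0 : 0 <= `|K| / e by rewrite divr_ge0 // ltW.
have Hb := archi_boundP K0.
set b := Num.bound _ in Hb; exists b.
rewrite /wk; have bp : 0 < (b.+1)%:R :> R by rewrite ltr0Sn.
rewrite ltr_pdivrMr // (le_lt_trans (ler_norm K)) //.
by rewrite -ltr_pdivrMl // mulrC (lt_le_trans Hb) // ler_nat leqnSn.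
Qed.

Lemma cauchy_lim (u c : nat -> R) :
  (forall k, 0 <= c k) ->
  (forall k m, (k <= m)%N -> `|u k - u m| <= c k) ->
  exists L, forall k, `|u k - L| <= c k.
Proof.
move=> c0 H.
pose S := [set u m + c m | m in [set: nat]].
have Sn : S !=set0 by exists (u 0%N + c 0%N); exists 0%N.
have lb k : lbound S (u k - c k).
  move=> _ [m _ <-].
  case: (leqP k m) => km.
    have := H k m km; rewrite ler_norml => /andP[_ h]. have := c0 m. by lra.
  have := H m k (ltnW km); rewrite ler_norml => /andP[h _]. have := c0 k. by lra.
exists (inf S) => k; rewrite ler_norml; apply/andP; split.
  have : inf S <= u k + c k.
    by apply: ge_inf; [exists (u k - c k); exact: lb|exists k].
  by lra.
have := lb_le_inf Sn (lb k). by lra.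
Qed.

End Lim.


Section Sep.
Variables (R : realType) (n : nat).
Notation vec := 'cV[R]_n.
Notation N x := (dotv x x).

Lemma nrmD (u v : vec) : N (u + v) = N u + 2 * dotv u v + N v.
Proof. rewrite dotvDl !dotvDr (dotvC v u); ring. Qed.

Lemma parallelogram (x y z : vec) :
  N (x - y) + 4 * N (z - ((1 - 2^-1) *: x + 2^-1 *: y)) =
  2 * N (z - x) + 2 * N (z - y).
Proof.
rewrite /dotv !mulr_sumr -!big_split /=; apply: eq_bigr => i _; rewrite !mxE.
by field.
Qed.

Lemma segment_id (z p a : vec) (t : R) :
  N (z - ((1 - t) *: p + t *: a)) = N (z - p) - 2 * t * dotv (z - p) (a - p) + t ^+ 2 * N (a - p).
Proof.
rewrite /dotv !mulr_sumr -sumrB -big_split /=; apply: eq_bigr => i _; rewrite !mxE.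
ring.
Qed.


Lemma nearest (C : set vec) (z : vec) : closed_set C -> convex_set C -> C 0 ->
  exists2 p, C p & forall a, C a -> N (z - p) <= N (z - a).
Proof.
move=> Ccl Ccv C0.
pose S := [set N (z - a) | a in C].
have Sn : S !=set0 by exists (N (z - 0)); exists 0.
have Slb : has_lbound S by exists 0 => _ [a _ <-]; exact: dotvv_ge0.
set D := inf S.
have DS a : C a -> D <= N (z - a) by move=> Ca; apply: ge_inf => //; exists a.
have D0 : 0 <= D by apply: lb_le_inf => // _ [a _ <-]; exact: dotvv_ge0.
have ex k : exists a, C a /\ N (z - a) < D + wk R k ^+ 2.
  have : inf S < D + wk R k ^+ 2 by rewrite ltrDl exprn_gt0 // wk_gt0.
  by move=> /(inf_lt Sn) [_ [a Ca <-]] h; exists a.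
have [a Ha] := choice ex.
have par k m : (k <= m)%N -> N (a k - a m) <= (2 * wk R k) ^+ 2.
  move=> km; have [Ck Hk] := Ha k; have [Cm Hm] := Ha m.
  have Cmid := Ccv _ _ (2^-1) Ck Cm.
  have h2 : (0 <= (2^-1 : R)) && ((2^-1 : R) <= 1) by rewrite invr_ge0 ler0n invf_le1 ?ltr0n ?ler1n.
  have := DS _ (Cmid h2); have := parallelogram (a k) (a m) z.
  have wmk : wk R m ^+ 2 <= wk R k ^+ 2.
    have hh := wk_mono R km; have hh' := wk_gt0 R m; rewrite !expr2; nra.
  lra.
have crd k m i : (k <= m)%N -> `|a k i 0 - a m i 0| <= 2 * wk R k.
  move=> km; have := le_trans (coord_le (a k - a m) i) (par k m km).
  have w0 : 0 <= 2 * wk R k by rewrite mulr_ge0 ?ltW ?wk_gt0.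
  rewrite !mxE => h; rewrite -ler_sqr ?nnegrE // real_normK ?num_real //.
have exL i : exists L, forall k, `|a k i 0 - L| <= 2 * wk R k.
  apply: (cauchy_lim (u := fun k => a k i 0)) => [k|k m km].
    by rewrite mulr_ge0 ?ltW ?wk_gt0.
  exact: crd.
have [L HL] := choice exL.
pose p : vec := \col_i L i.
have bnd k : N (a k - p) <= n%:R * (2 * wk R k) ^+ 2.
  by apply: dotvv_le => i; rewrite !mxE; exact: HL.
have bnd' k : N (a k - p) <= 4 * n%:R * wk R k * wk R k.
  have := bnd k; have := wk_gt0 R k; have := wk_le1 R k.
  move=> h1 h2 h3; apply: (le_trans h3); rewrite exprMn.
  have -> : (2 : R) ^+ 2 = 4 by rewrite expr2; lra.
  by rewrite expr2; lra.
have Cp : C p.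
  apply: Ccl => e e0.
  have [k Hk] := wk_small (4 * n%:R) (exprn_gt0 2 e0).
  exists (a k); first by case: (Ha k).
  rewrite distv_ltE //; apply: (le_lt_trans (bnd' k)).
  apply: le_lt_trans Hk; rewrite -mulrA ler_wpM2l ?mulr_ge0 //.
  by rewrite ger_pMr ?wk_gt0 ?wk_le1.
exists p => // a0 Ca0; apply: le_trans (DS _ Ca0).
rewrite leNgt; apply/negP => Dlt.
set eps := N (z - p) - D.
have eps0 : 0 < eps by rewrite /eps subr_gt0.
have [k Hk] := wk_small (2 + D + 8 * n%:R) eps0.
have [Ck Hu] := Ha k.
have key : N (z - p) <= D + (2 + D + 8 * n%:R) * wk R k.
have -> : z - p = (z - a k) + (a k - p) by rewrite addrA subrK.
rewrite nrmD.
set u := z - a k; set v := a k - p.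
have w0 := wk_gt0 R k; have w1 := wk_le1 R k.
have := dot_le u v w0.
have ww : wk R k * wk R k <= wk R k * 1 by apply: ler_wpM2l; [exact: ltW|].
have h5 : N u <= D + wk R k.
  by apply: (le_trans (ltW Hu)); rewrite lerD2l expr2 -[X in _ <= X]mulr1.
have h1 : N u <= D + 1 by lra.
have h2 : wk R k * N u <= wk R k * (D + 1) by apply: ler_wpM2l; [exact: ltW|].
have h3 : N v / wk R k <= 4 * n%:R * wk R k.
  by rewrite ler_pdivrMr //; exact: bnd'.
have n0 : 0 <= 4 * n%:R * wk R k :> R by rewrite !mulr_ge0 ?ler0n ?ltW.
have h4 : N v <= 4 * n%:R * wk R k.
  apply: (le_trans (bnd' k)); rewrite -[X in _ <= X]mulr1.
  by apply: ler_wpM2l.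
lra.
move: Hk Dlt key; rewrite /eps. lra.
Qed.


Lemma separation (C : set vec) (z : vec) : closed_set C -> convex_set C -> C 0 -> ~ C z ->
  exists y, (forall a, C a -> dotv y a <= 1) /\ 1 < dotv y z.
Proof.
move=> Ccl Ccv C0 Cz.
have [p Cp pmin] := nearest z Ccl Ccv C0.
have var a : C a -> dotv (z - p) (a - p) <= 0.
  move=> Ca; rewrite leNgt; apply/negP => d0.
  set d := dotv (z - p) (a - p) in d0.
  set Nn := N (a - p).
  have Nn0 : 0 <= Nn by exact: dotvv_ge0.
  set t := d / (d + Nn).
  have dN : 0 < d + Nn by lra.
  have t0 : 0 < t by rewrite divr_gt0.
  have t1 : t <= 1 by rewrite ler_pdivrMr // mul1r; lra.
  have tdN : t * (d + Nn) = d by rewrite /t divfK // gt_eqF.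
  have h01 : (0 <= t) && (t <= 1) by rewrite t1 ltW.
  have := pmin _ (Ccv _ _ t Cp Ca h01).
  rewrite segment_id -/d -/Nn => h.
  have h' : t * (2 * d) <= t * (t * Nn) by move: h; rewrite expr2; nra.
  have : 2 * d <= t * Nn by move: h'; rewrite ler_pM2l.
  nra.
set y0 := z - p.
have y0n : y0 != 0 by apply/eqP => /eqP; rewrite subr_eq0 => /eqP zp; apply: Cz; rewrite zp.
set c := dotv y0 p.
have hc a : C a -> dotv y0 a <= c by move=> Ca; have := var a Ca; rewrite dotvBr subr_le0.
have c0 : 0 <= c by have := hc 0 C0; rewrite dotv0r.
have Ny : 0 < N y0.
  rewrite lt_neqAle dotvv_ge0 andbT eq_sym; apply/eqP => /dotvv_eq0 h.
  by move/eqP: y0n.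
have dz : dotv y0 z = c + N y0.
  by rewrite /c {2}/y0 dotvBr; ring.
have cd : 0 < c + dotv y0 z by lra.
exists ((2 / (c + dotv y0 z)) *: y0); split.
  move=> a Ca; rewrite dotvZl mulrAC ler_pdivrMr // mul1r.
  have := hc a Ca; lra.
rewrite dotvZl mulrAC ltr_pdivlMr // mul1r.
lra.
Qed.

End Sep.


Section Gauge.
Variables (R : realType) (n : nat).
Notation vec := 'cV[R]_n.
Notation N x := (dotv x x).

Lemma translate_closed (A : set vec) f : closed_set A -> closed_set (translate A f).
Proof.
move=> Acl x Hx; exists (x + f); last by rewrite addrK.
apply: Acl => e e0; have [_ [b Ab <-] hb] := Hx e e0.
exists b => //; move: hb; rewrite /distv.
have -> : b - f - x = b - (x + f) by apply/matrixP => i j; rewrite !mxE; ring.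
done.
Qed.

Lemma translate_convex (A : set vec) f : convex_set A -> convex_set (translate A f).
Proof.
move=> Acv _ _ t [b1 A1 <-] [b2 A2 <-] t01.
exists ((1 - t) *: b1 + t *: b2); first exact: Acv.
by apply/matrixP => i j; rewrite !mxE; ring.
Qed.

Lemma interior_in (A : set vec) f : interior_pt A f -> A f.
Proof.
move=> [e e0 H]; apply: H; rewrite distv_ltE // subrr dotv0r.
by rewrite exprn_gt0.
Qed.

Lemma translate0 (A : set vec) f : interior_pt A f -> translate A f 0.
Proof. by move=> /interior_in Af; exists f => //; rewrite subrr. Qed.

Definition gset (X : set vec) (r : vec) : set R :=
  [set lam : R | 0 < lam /\ exists2 b, X b & r = lam *: b].

Lemma gset_lb X r : has_lbound (gset X r).
Proof. by exists 0 => x [/ltW]. Qed.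

Lemma gset_n0 (A : set vec) f r : interior_pt A f -> gset (translate A f) r !=set0.
Proof.
move=> [e e0 H].
set Nr := N r.
have Nr0 : 0 <= Nr by exact: dotvv_ge0.
set lam := (Nr + 1) / e.
have lam0 : 0 < lam by rewrite divr_gt0 //; lra.
exists lam; split => //.
exists (lam^-1 *: r); last by rewrite scalerA mulfV ?gt_eqF // scale1r.
exists (lam^-1 *: r + f); last by rewrite addrK.
apply: H; rewrite distv_ltE // addrK dotvZl dotvZr -/Nr.
rewrite /lam invf_div.
set q := e / (Nr + 1).
have q0 : 0 < q by rewrite divr_gt0 //; lra.
have hq : q * (Nr + 1) = e by rewrite /q divfK //; apply/lt0r_neq0; lra.
rewrite expr2 -hq.
nra.
Qed.

Lemma gauge_le X r lam : gset X r lam -> gauge X r <= lam.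
Proof. by move=> h; apply: ge_inf => //; exact: gset_lb. Qed.

Lemma gauge_ge0 (A : set vec) f r : interior_pt A f -> 0 <= gauge (translate A f) r.
Proof.
move=> h; apply: lb_le_inf; first exact: gset_n0.
by move=> x [/ltW].
Qed.

Lemma gauge_lt (A : set vec) f r m : interior_pt A f -> gauge (translate A f) r < m ->
  exists2 lam, gset (translate A f) r lam & lam < m.
Proof. by move=> h; apply: inf_lt; exact: gset_n0. Qed.


Lemma key (A B : set vec) f r (e : R) : Cn A -> interior_pt A f -> interior_pt B f ->
  0 < e -> (fmetric f B A < e%:E)%E ->
  gauge (translate A f) r <= gauge (translate B f) r + e * ((1 + N r) / 2).
Proof.
move=> [Acl [Acv _]] iA iB e0 hm.
set XA := translate A f; set XB := translate B f.
set gA := gauge XA r; set gB := gauge XB r; set K := (1 + N r) / 2.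
rewrite leNgt; apply/negP => H.
have gB0 : 0 <= gB by exact: gauge_ge0.
set d := (gA - gB - e * K) / 3.
have d0 : 0 < d by rewrite /d divr_gt0 //; lra.
set mu := gA - d; set mu' := gB + d.
have eK0 : 0 <= e * K.
  apply: mulr_ge0; first exact: ltW.
  apply: divr_ge0; last exact: ler0n.
  by apply: addr_ge0; [exact: ler01 | exact: dotvv_ge0].
have hd : 3 * d = gA - gB - e * K by rewrite /d mulrC divfK // pnatr_eq0.
have hmu : mu = gA - d by [].
have hmu' : mu' = gB + d by [].
clearbody mu mu' d.
have mu0 : 0 < mu by lra.
have nz : ~ XA (mu^-1 *: r).
  move=> h; have : gset XA r mu.
    by split => //; exists (mu^-1 *: r) => //; rewrite scalerA mulfV ?gt_eqF // scale1r.
  move/gauge_le; rewrite -/gA; lra.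
have [y [yP yz]] := separation (translate_closed (f:=f) Acl) (translate_convex (f:=f) Acv)
  (translate0 iA) nz.
have yr : mu < dotv y r.
  by move: yz; rewrite dotvZr mulrC ltr_pdivlMr // mul1r.
have [y' y'P dyy'] : exists2 y', polar XB y' & distv y y' < e.
  move: hm; rewrite /fmetric /hausdorff gt_max => /andP[_ h2].
  have : (edist_set y (polar XB) < e%:E)%E.
    apply: le_lt_trans h2; apply: ereal_sup_ubound; exists y => //.
  by move=> /ereal_inf_lt [_ [y' Py' <-]]; rewrite lte_fin => h; exists y'.
have hlt : gB < mu' by lra.
have [lam [lam0 [b XBb rb]] lamlt] := gauge_lt iB hlt.
have y'r : dotv y' r <= lam.
  rewrite rb dotvZr -[X in _ <= X]mulr1; apply: ler_wpM2l; [exact: ltW | exact: y'P].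
have e20 : 0 < e^-1 by rewrite invr_gt0.
have := dot_le (y - y') r e20; rewrite invrK.
have : N (y - y') < e ^+ 2 by rewrite -distv_ltE.
move=> h1 h2.
have h3 : e^-1 * N (y - y') < e.
  by rewrite mulrC ltr_pdivrMr // -expr2.
have hK : 2 * (e * K) = e + N r * e by rewrite /K; field.
move: h2; rewrite dotvBl => h2.
clearbody K gA gB.
lra.
Qed.

End Gauge.


Lemma fmetric_self (R : realType) (n : nat) (f : 'cV[R]_n) (B : set 'cV[R]_n) :
  (fmetric f B B <= 0)%E.
Proof.
rewrite /fmetric /hausdorff maxxx; apply: ge_ereal_sup => _ [x Px <-].
apply: ge_ereal_inf; exists (distv x x)%:E; first by exists x.
by rewrite /distv subrr dotv0r sqrtr0.
Qed.

Theorem proposition3p8 (R : realType) (n : nat) (calB : set (set 'cV[R]_n))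
  (hB : calB `<=` Cn (n:=n)) :
  forall (k : nat) (Rm : 'M[R]_(n, k)) (f : 'cV[R]_n),
    ~ integral_vec f ->
    CBfam calB Rm f = CBfam (clf f (calB `&` Cnf f)) Rm f.
Proof.
move=> k Rm f _; apply/seteqP; split => s [s0 Hs]; split => // B HB.
- case: HB => _ Happ; split => // iB.
  rewrite leNgt; apply/negP => Hlt.
  set S := \sum_(j < k) s j 0 * gauge (translate B f) (col j Rm) in Hlt.
  set M := \sum_(j < k) s j 0 * ((1 + dotv (col j Rm) (col j Rm)) / 2).
  have M0 : 0 <= M.
    apply: sumr_ge0 => j _; apply: mulr_ge0; first exact: s0.
    apply: divr_ge0; last exact: ler0n.
    by apply: addr_ge0; [exact: ler01 | exact: dotvv_ge0].
  set g := 1 - S.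
  have g0 : 0 < g by rewrite /g subr_gt0.
  set eps := g / (M + 1).
  have eps0 : 0 < eps by rewrite /eps divr_gt0 //; lra.
  have [A0 [cA0 [CnA0 iA0]] hm] := Happ eps eps0.
  have [_ h] := Hs A0 cA0.
  have h1 := h iA0.
  have h2 : \sum_(j < k) s j 0 * gauge (translate A0 f) (col j Rm) <= S + eps * M.
    rewrite /S /M mulr_sumr -big_split /=; apply: ler_sum => j _.
    rewrite mulrCA -mulrDr; apply: ler_wpM2l; first exact: s0.
    exact: key.
  have h3 : eps * M < g.
    rewrite /eps mulrAC ltr_pdivrMr; last lra.
    have : g * M < g * (M + 1) by rewrite ltr_pM2l //; lra.
    done.
  have hg : g = 1 - S by [].
  clearbody g eps M S.
  lra.
- split => // iB.
  have cB : clf f (calB `&` Cnf f) B.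
    split; first by split; [exact: hB | exact: iB].
    move=> e e0; exists B; first by split => //; split => //; exact: hB.
    by apply: (le_lt_trans (fmetric_self f B)); rewrite lte_fin.
  by have [_ h] := Hs B cB; exact: h.
Qed.
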